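(* Let $|\psi\rangle=\sum_jc_j|\phi_j\rangle$ be a normalized $n$-qubit state where the $|\phi_j\rangle$ are stabilizer states, and let $k\ge1$ be an integer. Then one can sample from an ensemble $\rho_1$ such that every sampled pure state has stabilizer rank at most $k$ and $$\|\rho_1-|\psi\rangle\langle\psi|\|_1\le\frac{2\|c\|_1^2}{k}+\sqrt{\mathrm{Var}[\langle\Omega|\Omega\rangle]},$$ where $|\Omega\rangle$ is the random sparsified vector defined below.
   Context: Sparsification: let $|\omega_1\rangle,\dots,|\omega_k\rangle$ be i.i.d. random vectors with $|\omega_\alpha\rangle=(c_j/|c_j|)|\phi_j\rangle$ with probability $|c_j|/\|c\|_1$, and $|\Omega\rangle=\frac{\|c\|_1}{k}\sum_{\alpha=1}^k|\omega_\alpha\rangle$. The ensemble is $\rho_1=\mathbb E\big[|\Omega\rangle\langle\Omega|/\langle\Omega|\Omega\rangle\big]$, sampled by drawing $|\Omega\rangle$ and normalizing. The stabilizer rank of a vector is the minimal number of stabilizer states in a linear decomposition of it. *)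

(* Defs.v *)
From HB Require Import structures.
From mathcomp Require Import all_boot all_order all_algebra.

Set Implicit Arguments. Unset Strict Implicit. Unset Printing Implicit Defensive.
Import Order.TTheory GRing.Theory Num.Theory Num.Def.
Local Open Scope ring_scope.

Section Quantum.
Variable C : numClosedFieldType.

(* ---------- n-qubit Hilbert space ----------
   Dimension #|{ffun 'I_n -> bool}| (= 2^n); the computational basis index
   x : 'I_(qdim n) corresponds to the bit string  bits x. *)
Definition qdim (n : nat) : nat := #|{ffun 'I_n -> bool}|.
Definition bits {n : nat} (x : 'I_(qdim n)) : {ffun 'I_n -> bool} := enum_val x.

Definition ket (n : nat) := 'cV[C]_(qdim n).

Definition braket {n : nat} (u v : ket n) : C := ((map_mx conjC u)^T *m v) 0 0.
Definition outer {n : nat} (u v : ket n) : 'M[C]_(qdim n) := u *m (map_mx conjC v)^T.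

(* ---------- Pauli operators ----------
   single-qubit Paulis indexed by 'I_4 : 0 = I, 1 = X, 2 = Y, 3 = Z,
   given as matrix entries  <a| sigma |b>. *)
Definition pauli1 (t : 'I_4) (a b : bool) : C :=
  match val t with
  | 0%N => (a == b)%:R
  | 1%N => (a != b)%:R
  | 2%N => (a != b)%:R * (if a then 'i else - 'i)
  | _ => (a == b)%:R * (if a then -1 else 1)
  end.

Definition pauli_string {n : nat} (p : {ffun 'I_n -> 'I_4}) : 'M[C]_(qdim n) :=
  \matrix_(x, y) \prod_(i < n) pauli1 (p i) (bits x i) (bits y i).

Definition pauli_op {n : nat} (sp : bool * {ffun 'I_n -> 'I_4}) : 'M[C]_(qdim n) :=
  (if sp.1 then -1 else 1) *: pauli_string sp.2.

(* ---------- stabilizer states ----------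
   A (normalized) state is a stabilizer state iff its stabilizer group
   {P in Pauli group | P psi = psi} has 2^n elements (elements of the Pauli
   group with phase +-i can never stabilize a nonzero vector, so only the
   Hermitian elements (+-1) * Pauli string need to be counted). *)
Definition stabilizer_state {n : nat} (psi : ket n) : Prop :=
  braket psi psi = 1 /\
  #|[set sp : bool * {ffun 'I_n -> 'I_4} | pauli_op sp *m psi == psi]| = (2 ^ n)%N.

Definition stabilizer_rank_le {n : nat} (v : ket n) (k : nat) : Prop :=
  exists (r : nat) (a : 'I_r -> C) (s : 'I_r -> ket n),
    (r <= k)%N /\ (forall i, stabilizer_state (s i)) /\ v = \sum_(i < r) a i *: s i.

(* ---------- trace norm ----------
   ||A||_1 = Tr sqrt(A^dagger A) = sum of the square roots of the eigenvalues
   of the (normal, positive semidefinite) matrix A^dagger A, obtained from the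
   spectral decomposition of spectral.v. *)
Definition trace_norm (d : nat) (A : 'M[C]_d) : C :=
  \sum_(i < d) sqrtC (spectral_diag ((map_mx conjC A)^T *m A) 0 i).

(* A sample is a : {ffun 'I_k -> 'I_m} (the indices j drawn for
   omega_1..omega_k), drawn i.i.d. with P(j) = |c_j| / ||c||_1. *)
Definition l1norm {m : nat} (c : 'I_m -> C) : C := \sum_(j < m) `|c j|.

Definition sample_prob {m k : nat} (c : 'I_m -> C) (a : {ffun 'I_k -> 'I_m}) : C :=
  \prod_(al < k) (`|c (a al)| / l1norm c).

Definition omega {n m k : nat} (c : 'I_m -> C) (phi : 'I_m -> ket n)
  (a : {ffun 'I_k -> 'I_m}) (al : 'I_k) : ket n :=
  (c (a al) / `|c (a al)|) *: phi (a al).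

Definition Omega {n m k : nat} (c : 'I_m -> C) (phi : 'I_m -> ket n)
  (a : {ffun 'I_k -> 'I_m}) : ket n :=
  (l1norm c / k%:R) *: \sum_(al < k) omega c phi a al.

Definition Omega_norm2 {n m k : nat} (c : 'I_m -> C) (phi : 'I_m -> ket n)
  (a : {ffun 'I_k -> 'I_m}) : C :=
  braket (Omega c phi a) (Omega c phi a).

Definition sampled_state {n m k : nat} (c : 'I_m -> C) (phi : 'I_m -> ket n)
  (a : {ffun 'I_k -> 'I_m}) : ket n :=
  (sqrtC (Omega_norm2 c phi a))^-1 *: Omega c phi a.

(* rho_1 = E[ |Omega><Omega| / <Omega|Omega> ]
   (convention: the term is 0 if Omega = 0, since x / 0 = 0 in MathComp) *)
Definition rho1 {n m : nat} (k : nat) (c : 'I_m -> C) (phi : 'I_m -> ket n)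
  : 'M[C]_(qdim n) :=
  \sum_(a : {ffun 'I_k -> 'I_m})
     (sample_prob c a / Omega_norm2 c phi a) *: outer (Omega c phi a) (Omega c phi a).

Definition var_Omega_norm2 {n m : nat} (k : nat) (c : 'I_m -> C) (phi : 'I_m -> ket n) : C :=
  \sum_(a : {ffun 'I_k -> 'I_m}) sample_prob c a * (Omega_norm2 c phi a) ^+ 2
  - (\sum_(a : {ffun 'I_k -> 'I_m}) sample_prob c a * Omega_norm2 c phi a) ^+ 2.

End Quantum.

(* Main.v *)
Require Import Defs.
From HB Require Import structures.
From mathcomp Require Import all_boot all_order all_algebra.
Set Implicit Arguments. Unset Strict Implicit. Unset Printing Implicit Defensive.
Import Order.TTheory GRing.Theory Num.Theory Num.Def.
Local Open Scope ring_scope.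
From mathcomp Require Import ring.
Section TN.
Variable C : numClosedFieldType.
Notation adj X := (map_mx conjC X)^T.

Lemma adjM m n p (X : 'M[C]_(m,n)) (Y : 'M[C]_(n,p)) : adj (X *m Y) = adj Y *m adj X.
Proof. by rewrite map_mxM trmx_mul. Qed.

Lemma adjK m n (X : 'M[C]_(m,n)) : adj (adj X) = X.
Proof. by apply/matrixP=> i j; rewrite !mxE conjCK. Qed.

Lemma adj_diag n (s : 'rV[C]_n) : adj (diag_mx s) = diag_mx (map_mx conjC s).
Proof. by apply/matrixP=> i j; rewrite !mxE; case: eqVneq => [->|]; rewrite ?mulr1n ?mulr0n ?conjC0 // eq_sym => /negPf->; rewrite mulr0n conjC0. Qed.

Definition bk d (u v : 'cV[C]_d) : C := (adj u *m v) 0 0.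

Lemma bkE d (u v : 'cV[C]_d) : bk u v = \sum_i (u i 0)^* * v i 0.
Proof. by rewrite /bk mxE; apply: eq_bigr => i _; rewrite !mxE. Qed.

Lemma bk_ge0 d (u : 'cV[C]_d) : 0 <= bk u u.
Proof. by rewrite bkE sumr_ge0 // => i _; rewrite mulrC mul_conjC_ge0. Qed.

Lemma bk_dot d (u v : 'cV[C]_d) : bk u v = dotmx (v^T) (u^T).
Proof. by rewrite dotmxE bkE !mxE; apply: eq_bigr => i _; rewrite !mxE mulrC. Qed.

Lemma bk_CS d (u v : 'cV[C]_d) : `|bk u v| <= sqrtC (bk u u) * sqrtC (bk v v).
Proof.
rewrite !bk_dot mulrC.
exact: (CauchySchwarz_sqrt (@dotmx C d) (v^T) (u^T)).
Qed.

Lemma adj_mx_normal d (B : 'M[C]_d) : adj B = B -> B \is normalmx.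
Proof. by move=> hB; apply/normalmxP; rewrite -map_trmx hB. Qed.

Lemma sqrt_div (x : C) : (sqrtC x)^-1 * x = sqrtC x.
Proof.
have [->|nz] := eqVneq (sqrtC x) 0; first by rewrite invr0 mul0r.
by rewrite -{2}(sqrtCK x) expr2 mulKf.
Qed.

Lemma tn_key d (A : 'M[C]_d) : exists M : 'M[C]_d,
  [/\ trace_norm A = \tr (M *m A), 0 <= trace_norm A &
      forall u : 'cV_d, `|\tr (M *m (u *m adj u))| <= bk u u].
Proof.
set B := adj A *m A.
have hB : adj B = B by rewrite adjM adjK.
have /orthomx_spectralP BE := adj_mx_normal hB.
have Pu := spectral_unitarymx B.
move: BE; rewrite invmx_unitary //.
set P := spectralmx B; set mu := spectral_diag B => BE.
have PP : P *m adj P = 1%:M by rewrite map_trmx; apply/unitarymxP.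
have PP' : adj P *m P = 1%:M by apply: mulmx1C.
have DE : diag_mx mu = P *m B *m adj P.
  by rewrite BE -map_trmx !mulmxA PP mul1mx -mulmxA PP mulmx1.
have mu_ge0 i : 0 <= mu 0 i.
  have -> : mu 0 i = diag_mx mu i i by rewrite mxE eqxx mulr1n.
  rewrite DE /B.
  have -> : P *m (adj A *m A) *m adj P = adj (A *m adj P) *m (A *m adj P).
    by rewrite adjM adjK !mulmxA.
  by rewrite mxE sumr_ge0 // => x _; rewrite !mxE mulrC mul_conjC_ge0.
have tnE : trace_norm A = \sum_i sqrtC (mu 0 i) by [].
pose s := \row_i (sqrtC (mu 0 i))^-1.
pose S := diag_mx s.
exists (adj P *m S *m P *m adj A); split.
- rewrite tnE.
  have -> : adj P *m S *m P *m adj A *m A = adj P *m (S *m (P *m B)) by rewrite /B !mulmxA.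
  rewrite mxtrace_mulC.
  have -> : S *m (P *m B) *m adj P = S *m diag_mx mu by rewrite DE !mulmxA.
  rewrite /mxtrace; apply: eq_bigr => i _.
  by rewrite mul_mx_diag !mxE eqxx mulr1n sqrt_div.
- by rewrite tnE sumr_ge0 // => i _; rewrite sqrtC_ge0.
move=> u.
pose Q := adj P *m adj S *m P.
pose y := A *m Q *m u.
have -> : \tr (adj P *m S *m P *m adj A *m (u *m adj u)) = bk y u.
  rewrite mulmxA mxtrace_mulC trace_mx11 /bk /y. rewrite /Q !adjM !adjK !mulmxA.
  done.
have SDS : S *m diag_mx mu *m adj S =
    diag_mx (\row_i (s 0 i * mu 0 i * (s 0 i)^*)).
  rewrite adj_diag; apply/matrixP => i j.
  rewrite !mul_mx_diag !mxE; case: eqVneq => [->|nij]; first by rewrite !mulr1n.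
  by rewrite !mulr0n !mul0r.
have e_le i : 0 <= s 0 i * mu 0 i * (s 0 i)^* <= 1.
  rewrite /s mxE sqrt_div.
  have r0 : 0 <= sqrtC (mu 0 i) by rewrite sqrtC_ge0.
  rewrite (geC0_conj (x := (sqrtC (mu 0 i))^-1)) ?invr_ge0 //.
  have [->|nz] := eqVneq (sqrtC (mu 0 i)) 0; first by rewrite invr0 mulr0 lexx ler01.
  by rewrite mulfV // lexx ler01.
pose v := P *m u.
have byy : bk y y <= bk u u.
  have -> : bk y y = (adj v *m (S *m (P *m B *m adj P) *m adj S) *m v) 0 0.
    by rewrite /bk /y /v /Q /B !adjM !adjK !mulmxA.
  rewrite -DE.
  have -> : bk u u = (adj v *m v) 0 0.
    by rewrite /bk /v adjM -!mulmxA [adj P *m (P *m u)]mulmxA PP' mul1mx.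
  rewrite SDS !mxE; apply: ler_sum => i _.
  rewrite mul_mx_diag !mxE.
  set w := \sum_j P i j * u j 0.
  have := e_le i; rewrite /s mxE; set e := (X in 0 <= X <= 1) => /andP[e0 e1].
  by rewrite -mulrA [e * _]mulrC mulrA ler_piMr // mulrC mul_conjC_ge0.
apply: le_trans (bk_CS y u) _.
rewrite -[leRHS](sqrtCK (bk u u)) expr2 ler_wpM2r ?sqrtC_ge0 ?bk_ge0 //.
by rewrite ler_sqrtC // nnegrE bk_ge0.
Qed.
End TN.
Section Gen.
Variable C : numClosedFieldType.

Lemma var_id (I : finType) (p x : I -> C) : \sum_i p i = 1 ->
  \sum_i p i * (x i - \sum_j p j * x j) ^+ 2 =
  \sum_i p i * x i ^+ 2 - (\sum_i p i * x i) ^+ 2.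
Proof.
move=> p1; set m := \sum_j p j * x j.
transitivity (\sum_i (p i * x i ^+ 2 - (2 * m) * (p i * x i) + m ^+ 2 * p i)).
  by apply: eq_bigr => i _; ring.
rewrite big_split sumrB /= -!mulr_sumr p1 -/m; ring.
Qed.

Lemma jensen (I : finType) (p t : I -> C) : (forall i, 0 <= p i) -> \sum_i p i = 1 ->
  (forall i, t i \is Num.real) -> (\sum_i p i * t i) ^+ 2 <= \sum_i p i * t i ^+ 2.
Proof.
move=> p0 p1 tr; rewrite -subr_ge0 -var_id //.
apply: sumr_ge0 => i _; apply: mulr_ge0 => //; rewrite -realEsqr.
apply: rpredB => //; apply: rpred_sum => j _; apply: rpredM => //.
exact: ger0_real.
Qed.

Lemma marg k m (q : 'I_m -> C) (al be : 'I_k) (f g : 'I_m -> C) : \sum_j q j = 1 ->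
  \sum_(a : {ffun 'I_k -> 'I_m}) (\prod_i q (a i)) * (f (a al) * g (a be)) =
  if al == be then \sum_j q j * (f j * g j)
  else (\sum_j q j * f j) * (\sum_j q j * g j).
Proof.
move=> q1.
pose h (i : 'I_k) (j : 'I_m) :=
  q j * ((if i == al then f j else 1) * (if i == be then g j else 1)).
transitivity (\sum_(a : {ffun 'I_k -> 'I_m}) \prod_i h i (a i)).
  apply: eq_bigr => a _; rewrite /h big_split big_split /=.
  by rewrite -!big_mkcond !big_pred1_eq.
rewrite -bigA_distr_bigA /h.
have o i : i != al -> i != be -> \sum_j q j * ((if i == al then f j else 1) *
     (if i == be then g j else 1)) = 1.
  by move=> /negPf-> /negPf->; rewrite -[RHS]q1; apply: eq_bigr => j _; rewrite !mulr1.
case: eqVneq => [<-|ne].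
  rewrite (bigD1 al) //= [X in _ * X]big1 ?mulr1 => [|i /= ne]; last first.
    by move: ne => /negPf->; rewrite -[RHS]q1; apply: eq_bigr => j _; rewrite !mulr1.
  by apply: eq_bigr => j _; rewrite eqxx.
rewrite (bigD1 al) //= (bigD1 be) /=; last by rewrite eq_sym.
rewrite [X in _ * (_ * X)]big1 ?mulr1 => [|i /andP[n1 n2]]; last by apply: o.
rewrite !eqxx (negPf ne) eq_sym (negPf ne).
congr (_ * _); apply: eq_bigr => j _; by rewrite ?mulr1 ?mul1r.
Qed.

Lemma double_sum k (D O : C) :
  \sum_(al < k) \sum_(be < k) (if al == be then D else O) =
  k%:R * D + (k%:R ^+ 2 - k%:R) * O.
Proof.
have h (al : 'I_k) : \sum_(be < k) (if al == be then D else O) = D + (k%:R - 1) * O.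
  have e : \sum_(be < k) (if al == be then D else O) =
           \sum_(be < k) (O + (al == be)%:R * (D - O)).
    by apply: eq_bigr => be _; case: eqVneq => _; rewrite ?mul1r ?mul0r; ring.
  rewrite e big_split /= sumr_const card_ord (bigD1 al) //= eqxx big1.
    by rewrite -mulr_natl (_ : true%:R = 1 :> C) //; ring.
  by move=> i ne; rewrite eq_sym (negPf ne) mul0r.
rewrite (eq_bigr _ (fun al _ => h al)) sumr_const card_ord -mulr_natl; ring.
Qed.

End Gen.
Section Main.
Variable C : numClosedFieldType.
Notation adj X := (map_mx conjC X)^T.

Lemma outerE n (u v : ket C n) x y : outer u v x y = u x 0 * (v y 0)^*.
Proof. by rewrite /outer mxE big_ord1 !mxE. Qed.

Lemma phase_mul (a : C) : `|a| * (a / `|a|) = a.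
Proof.
have [->|nz] := eqVneq a 0; first by rewrite normr0 mul0r.
by rewrite mulrC divfK // normr_eq0.
Qed.

Lemma phase_unit (a : C) : a != 0 -> (a / `|a|) * (a / `|a|)^* = 1.
Proof.
move=> nz; rewrite rmorphM fmorphV /= (geC0_conj (normr_ge0 a)).
have na : `|a| != 0 by rewrite normr_eq0.
rewrite mulrACA -normCK expr2; field; done.
Qed.

Lemma conjM_ge0 (r s : C) : 0 <= r -> conjC (r * s) = r * conjC s.
Proof. by move=> r0; rewrite rmorphM /= geC0_conj. Qed.

Lemma E_identity n m k (c : 'I_m -> C) (phi : 'I_m -> ket C n) :
  (0 < k)%N -> l1norm c != 0 ->
  \sum_(a : {ffun 'I_k -> 'I_m}) sample_prob c a *: outer (Omega c phi a) (Omega c phi a) =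
  (1 - k%:R^-1) *: outer (\sum_(j < m) c j *: phi j) (\sum_(j < m) c j *: phi j)
  + (l1norm c / k%:R) *: \sum_(j < m) `|c j| *: outer (phi j) (phi j).
Proof.
move=> k0 L0; set L := l1norm c.
have kn0 : (k%:R : C) != 0 by rewrite pnatr_eq0 -lt0n.
pose q j := `|c j| / L.
have q1 : \sum_j q j = 1 by rewrite -mulr_suml divff.
have Lr : L^* = L by rewrite geC0_conj // sumr_ge0.
apply/matrixP => x y.
pose W j := c j / `|c j| * phi j x 0.
pose V j := (c j / `|c j| * phi j y 0)^*.
have OmE (a : {ffun 'I_k -> 'I_m}) (z : 'I_(qdim n)) : Omega c phi a z 0 = L / k%:R * \sum_(al < k) (c (a al) / `|c (a al)| * phi (a al) z 0).
  by rewrite /Omega mxE summxE; congr (_ * _); apply: eq_bigr => al _; rewrite mxE.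
transitivity ((L / k%:R) ^+ 2 * \sum_(al < k) \sum_(be < k)
   \sum_(a : {ffun 'I_k -> 'I_m}) (\prod_i q (a i)) * (W (a al) * V (a be))).
  transitivity (\sum_(a : {ffun 'I_k -> 'I_m}) (L / k%:R) ^+ 2 * \sum_(al < k) \sum_(be < k)
     (\prod_i q (a i)) * (W (a al) * V (a be))).
    rewrite summxE; apply: eq_bigr => a _; rewrite mxE outerE !OmE.
    rewrite conjM_ge0 ?divr_ge0 ?ler0n ?sumr_ge0 // rmorph_sum /=.
    have -> : sample_prob c a = \prod_i q (a i) by [].
    have -> : \sum_(al < k) c (a al) / `|c (a al)| * phi (a al) x 0 = \sum_(al < k) W (a al) by [].
    have -> : \sum_(al < k) conjC (c (a al) / `|c (a al)| * phi (a al) y 0) = \sum_(al < k) V (a al) by [].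
    have SS : (\sum_(al < k) W (a al)) * (\sum_(be < k) V (a be)) =
              \sum_(al < k) \sum_(be < k) W (a al) * V (a be).
      by rewrite mulr_suml; apply: eq_bigr => al _; rewrite mulr_sumr.
    have -> : \sum_(al < k) \sum_(be < k) (\prod_i q (a i)) * (W (a al) * V (a be)) =
              (\prod_i q (a i)) * \sum_(al < k) \sum_(be < k) W (a al) * V (a be).
      by rewrite mulr_sumr; apply: eq_bigr => al _; rewrite mulr_sumr.
    rewrite -SS; ring.
  rewrite -mulr_sumr; congr (_ * _).
  rewrite exchange_big; apply: eq_bigr => al _.
  by rewrite exchange_big.
set psi := \sum_(j < m) c j *: phi j.
have psiE z : psi z 0 = \sum_j c j * phi j z 0.
  by rewrite /psi summxE; apply: eq_bigr => j _; rewrite mxE.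
have hO z : \sum_j q j * (c j / `|c j| * phi j z 0) = L^-1 * psi z 0.
  rewrite psiE mulr_sumr; apply: eq_bigr => j _.
  transitivity (L^-1 * (`|c j| * (c j / `|c j|)) * phi j z 0); first by rewrite /q; ring.
  by rewrite phase_mul mulrA.
have q0 j : 0 <= q j by rewrite /q divr_ge0 // sumr_ge0.
have hO2 : \sum_j q j * V j = L^-1 * conjC (psi y 0).
  rewrite -(geC0_conj (x := L^-1)) ?invr_ge0 ?sumr_ge0 // -rmorphM -hO rmorph_sum /=.
  by apply: eq_bigr => j _; rewrite conjM_ge0.
have hD : \sum_j q j * (W j * V j) = L^-1 * \sum_j `|c j| * (phi j x 0 * conjC (phi j y 0)).
  rewrite mulr_sumr; apply: eq_bigr => j _; rewrite /q /W /V.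
  have [->|nz] := eqVneq (c j) 0; first by rewrite normr0 !mul0r mulr0.
  rewrite rmorphM /=.
  transitivity (`|c j| / L * (phi j x 0 * conjC (phi j y 0)) * ((c j / `|c j|) * conjC (c j / `|c j|))).
    by ring.
  by rewrite phase_unit // mulr1; ring.
transitivity ((L / k%:R) ^+ 2 * \sum_(al < k) \sum_(be < k)
   (if al == be then \sum_j q j * (W j * V j) else (\sum_j q j * W j) * (\sum_j q j * V j))).
  by congr (_ * _); apply: eq_bigr => al _; apply: eq_bigr => be _; apply: marg.
have hS : (\sum_j `|c j| *: outer (phi j) (phi j)) x y =
    \sum_j `|c j| * (phi j x 0 * conjC (phi j y 0)).
  by rewrite summxE; apply: eq_bigr => j _; rewrite mxE outerE.
rewrite mxE [X in _ = _ + X]mxE hS mxE outerE.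
rewrite double_sum hD hO2 (hO x).
field.
by rewrite kn0 L0.
Qed.

End Main.
Section Fin.
Variable C : numClosedFieldType.
Notation adj X := (map_mx conjC X)^T.

Lemma bk_sumr d m (u : 'cV[C]_d) (a : 'I_m -> C) (v : 'I_m -> 'cV_d) :
  bk u (\sum_i a i *: v i) = \sum_i a i * bk u (v i).
Proof.
by rewrite /bk mulmx_sumr summxE; apply: eq_bigr => i _; rewrite -scalemxAr mxE.
Qed.

Lemma trMD d (M X Y : 'M[C]_d) : \tr (M *m (X + Y)) = \tr (M *m X) + \tr (M *m Y).
Proof. by rewrite mulmxDr mxtraceD. Qed.

Lemma trMZ d (M X : 'M[C]_d) a : \tr (M *m (a *: X)) = a * \tr (M *m X).
Proof. by rewrite -scalemxAr mxtraceZ. Qed.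

Lemma trMB d (M X Y : 'M[C]_d) : \tr (M *m (X - Y)) = \tr (M *m X) - \tr (M *m Y).
Proof. by rewrite -scaleN1r trMD trMZ mulN1r. Qed.

Lemma trM_sum d (I : finType) (M : 'M[C]_d) (F : I -> 'M[C]_d) :
  \tr (M *m \sum_i F i) = \sum_i \tr (M *m F i).
Proof.
rewrite mulmx_sumr; elim/big_rec2: _ => [|i x y _ <-]; first by rewrite mxtrace0.
by rewrite mxtraceD.
Qed.

Lemma tr_sum d (I : finType) (F : I -> 'M[C]_d) :
  \tr (\sum_i F i) = \sum_i \tr (F i).
Proof.
elim/big_rec2: _ => [|i x y _ <-]; first by rewrite mxtrace0.
by rewrite mxtraceD.
Qed.

Lemma tr_outer d (u : 'cV[C]_d) : \tr (u *m adj u) = bk u u.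
Proof. by rewrite mxtrace_mulC trace_mx11. Qed.

End Fin.

Unset Implicit Arguments.

Theorem lemma6 (C : numClosedFieldType) (n m k : nat)
  (c : 'I_m -> C) (phi : 'I_m -> ket C n) :
  (0 < k)%N ->
  (forall j, stabilizer_state (phi j)) ->
  braket (\sum_(j < m) c j *: phi j) (\sum_(j < m) c j *: phi j) = 1 ->
  (forall a : {ffun 'I_k -> 'I_m}, 0 < sample_prob c a ->
     stabilizer_rank_le (sampled_state c phi a) k) /\
  trace_norm (rho1 k c phi - outer (\sum_(j < m) c j *: phi j) (\sum_(j < m) c j *: phi j))
    <= 2 * l1norm c ^+ 2 / k%:R + sqrtC (var_Omega_norm2 k c phi).
Proof.
move=> k0 stab norm1; split.
  move=> a _; exists k, (fun i => (sqrtC (Omega_norm2 c phi a))^-1 * (l1norm c / k%:R) *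
     (c (a i) / `|c (a i)|)), (fun i => phi (a i)).
  split; first by []. split; first by move=> i; apply: stab.
  rewrite /sampled_state /Omega /omega scalerA scaler_sumr; apply: eq_bigr => i _.
  by rewrite !scalerA.
set psi := \sum_(j < m) c j *: phi j.
set L := l1norm c.
have phin j : bk (phi j) (phi j) = 1 := (stab j).1.
have n1 : bk psi psi = 1 := norm1.
have L1 : 1 <= L.
  have e : bk psi psi = \sum_j c j * bk psi (phi j) by rewrite {2}/psi bk_sumr.
  rewrite -normr1 -n1 e; apply: le_trans (ler_norm_sum _ _ _) _.
  apply: ler_sum => j _; rewrite normrM ler_piMr //.
  by apply: le_trans (bk_CS _ _) _; rewrite n1 phin sqrtC1 mulr1.
have Lpos : 0 < L by apply: lt_le_trans L1; apply: ltr01.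
have L0 : L != 0 by rewrite gt_eqF.
have Lge0 : 0 <= L := ltW Lpos.
have kn0 : (k%:R : C) != 0 by rewrite pnatr_eq0 -lt0n.
have kpos : (0 : C) < k%:R by rewrite ltr0n.
have EE := E_identity phi k0 L0; rewrite -/psi -/L in EE.
pose p (a : {ffun 'I_k -> 'I_m}) := sample_prob c a.
pose N (a : {ffun 'I_k -> 'I_m}) := Omega_norm2 c phi a.
pose O (a : {ffun 'I_k -> 'I_m}) := outer (Omega c phi a) (Omega c phi a).
have p0 a : 0 <= p a.
  by apply: prodr_ge0 => i _; rewrite divr_ge0 // sumr_ge0.
have p1 : \sum_a p a = 1.
  have := bigA_distr_bigA (fun (_ : 'I_k) (j : 'I_m) => `|c j| / L) => /= <-.
  by rewrite big1 // => i _; rewrite -mulr_suml divff.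
have N0 a : 0 <= N a := bk_ge0 _.
have NR a : N a \is Num.real by apply: ger0_real.
have trO a : \tr (O a) = N a by rewrite /O /outer tr_outer.
have EN : \sum_a p a * N a = 1 - k%:R^-1 + L ^+ 2 / k%:R.
  transitivity (\tr (\sum_a p a *: O a)).
    by rewrite tr_sum; apply: eq_bigr => a _; rewrite mxtraceZ trO.
  rewrite /p /O EE mxtraceD !mxtraceZ tr_outer n1 tr_sum.
  under eq_bigr do rewrite mxtraceZ tr_outer phin mulr1.
  have -> : \sum_i `|c i| = L by [].
  by field.
set var := var_Omega_norm2 k c phi.
have varE2 : var = \sum_a p a * N a ^+ 2 - (\sum_a p a * N a) ^+ 2 by [].
have var0 : 0 <= var.
  rewrite varE2 -var_id //; apply: sumr_ge0 => a _; apply: mulr_ge0 => //.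
  rewrite -realEsqr; apply: rpredB => //; apply: rpred_sum => a' _.
  by apply: rpredM; [exact: ger0_real | exact: NR].
set b := (L ^+ 2 - 1) / k%:R.
have b0 : 0 <= b by rewrite divr_ge0 ?ler0n // subr_ge0 exprn_ege1.
have h2 : \sum_a p a * `|1 - N a| ^+ 2 = var + b ^+ 2.
  transitivity (\sum_a (p a * N a ^+ 2 - 2 * (p a * N a) + p a)).
    by apply: eq_bigr => a _; rewrite real_normK ?rpredB ?rpred1 ?NR //; ring.
  rewrite big_split sumrB /= -mulr_sumr p1 varE2 EN /b; field.
  done.
have hj : (\sum_a p a * `|1 - N a|) ^+ 2 <= var + b ^+ 2.
  by rewrite -h2; apply: jensen => // a; exact: normr_real.
have Jb : \sum_a p a * `|1 - N a| <= sqrtC var + b.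
  have s0 : 0 <= \sum_a p a * `|1 - N a| by apply: sumr_ge0 => a _; rewrite mulr_ge0.
  rewrite -(ler_pXn2r (n:=2)) // ?nnegrE ?addr_ge0 ?sqrtC_ge0 //.
  apply: le_trans hj _; rewrite sqrrD sqrtCK lerD2r lerDl.
  by rewrite mulrn_wge0 // mulr_ge0 // sqrtC_ge0.
have [M [tnE tn0 Mb]] := tn_key (rho1 k c phi - outer psi psi).
set SP := \sum_j `|c j| *: outer (phi j) (phi j).
have EE' : \sum_a p a *: O a = (1 - k%:R^-1) *: outer psi psi + (L / k%:R) *: SP := EE.
have XE : rho1 k c phi - outer psi psi = \sum_a (p a / N a - p a) *: O a +
    ((L / k%:R) *: SP - k%:R^-1 *: outer psi psi).
  have -> : \sum_a (p a / N a - p a) *: O a = rho1 k c phi - \sum_a p a *: O a.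
    by rewrite -sumrB; apply: eq_bigr => a _; rewrite scalerBl.
  rewrite EE'; apply/matrixP => x y; rewrite !mxE; ring.
rewrite tnE in tn0.
apply: (le_trans (y := `|\tr (M *m (rho1 k c phi - outer psi psi))|)).
  by rewrite tnE ger0_norm.
rewrite XE trMD trMB trM_sum !trMZ.
apply: le_trans (ler_normD _ _) _.
have A : `|\sum_a \tr (M *m ((p a / N a - p a) *: O a))| <= \sum_a p a * `|1 - N a|.
  apply: le_trans (ler_norm_sum _ _ _) _; apply: ler_sum => a _.
  rewrite trMZ normrM.
  apply: (le_trans (y := `|p a / N a - p a| * N a)).
    by rewrite ler_wpM2l //; apply: Mb.
  have [->|nz] := eqVneq (N a) 0; first by rewrite mulr0 mulr_ge0.
  rewrite -{2}(ger0_norm (N0 a)) -normrM mulrBl divfK // -{1}[p a]mulr1 -mulrBr.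
  by rewrite normrM ger0_norm.
have B : `|L / k%:R * \tr (M *m SP) - k%:R^-1 * \tr (M *m outer psi psi)| <=
    L / k%:R * L + k%:R^-1.
  apply: le_trans (ler_normB _ _) _; rewrite !normrM.
  rewrite ger0_norm ?divr_ge0 ?ler0n ?Lge0 // ger0_norm ?invr_ge0 ?ler0n //.
  apply: lerD.
    rewrite ler_wpM2l ?divr_ge0 ?ler0n ?Lge0 //.
    rewrite /SP trM_sum; apply: le_trans (ler_norm_sum _ _ _) _; apply: ler_sum => j _.
    by rewrite trMZ normrM normr_id ler_piMr //; apply: le_trans (Mb _) _; rewrite phin.
  by rewrite ler_piMr ?invr_ge0 ?ler0n //; apply: le_trans (Mb _) _; rewrite n1.
apply: le_trans (lerD A B) _.
apply: le_trans (lerD Jb (lexx _)) _.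
rewrite le_eqVlt; apply/orP; left; apply/eqP; rewrite /b; field.
done.
Qed.
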